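(* Let $(X,d)$ be a metric space and let $u, u_1, u_2, \ldots \in F_{USC}(X)$. Then $u_n \stackrel{\Gamma}{\longrightarrow} u$ if and only if for all $\alpha \in (0,1]$, $$\overline{\{u>\alpha\}} \subseteq \liminf_{n\to\infty}[u_n]_\alpha \subseteq \limsup_{n\to\infty}[u_n]_\alpha \subseteq [u]_\alpha .$$
   Context: A fuzzy set on $X$ is a function $u:X\to[0,1]$. Its $\alpha$-cuts are $[u]_\alpha=\{x\in X: u(x)\ge\alpha\}$ for $\alpha\in(0,1]$ and $[u]_0=\overline{\{x: u(x)>0\}}$. $F_{USC}(X)$ is the set of fuzzy sets $u$ on $X$ such that $[u]_\alpha$ is a non-empty closed subset of $X$ for every $\alpha\in[0,1]$. For a sequence of sets $C_n\subseteq X$: $\liminf_{n} C_n=\{x\in X: x=\lim_n x_n,\ x_n\in C_n\}$ and $\limsup_n C_n=\{x\in X: x=\lim_j x_{n_j},\ x_{n_j}\in C_{n_j}\text{ for some subsequence}\}$; $C_n$ Kuratowski converges to $C$ if $C=\liminf_n C_n=\limsup_n C_n$. The endograph of $u$ is ${\rm end}\,u=\{(x,t)\in X\times[0,1]: u(x)\ge t\}$, and $X\times[0,1]$ carries the metric $\overline{d}((x,\alpha),(y,\beta))=d(x,y)+|\alpha-\beta|$. We say $u_n$ $\Gamma$-converges to $u$, written $u_n\stackrel{\Gamma}{\longrightarrow}u$, if ${\rm end}\,u_n$ Kuratowski converges to ${\rm end}\,u$ in $(X\times[0,1],\overline{d})$. *)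

(* Defs.v *)
From Stdlib Require Import Reals.
Open Scope R_scope.

Definition is_metric {T : Type} (d : T -> T -> R) : Prop :=
  (forall x y, 0 <= d x y) /\
  (forall x y, d x y = 0 <-> x = y) /\
  (forall x y, d x y = d y x) /\
  (forall x y z, d x z <= d x y + d y z).

Definition seq_lim {T : Type} (d : T -> T -> R) (s : nat -> T) (x : T) : Prop :=
  forall eps, 0 < eps -> exists N : nat, forall n, (N <= n)%nat -> d (s n) x < eps.

Definition closure {T : Type} (d : T -> T -> R) (S : T -> Prop) : T -> Prop :=
  fun x => forall eps, 0 < eps -> exists y, S y /\ d x y < eps.

Definition closed {T : Type} (d : T -> T -> R) (S : T -> Prop) : Prop :=
  forall x, closure d S x -> S x.

Definition nonempty {T : Type} (S : T -> Prop) : Prop := exists x, S x.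

Definition subset {T : Type} (A B : T -> Prop) : Prop := forall x, A x -> B x.

Definition set_eq {T : Type} (A B : T -> Prop) : Prop := forall x, A x <-> B x.

Definition acut {X : Type} (u : X -> R) (a : R) : X -> Prop := fun x => a <= u x.

Definition cut0 {X : Type} (d : X -> X -> R) (u : X -> R) : X -> Prop :=
  closure d (fun x => 0 < u x).

Definition FUSC {X : Type} (d : X -> X -> R) (u : X -> R) : Prop :=
  (forall x, 0 <= u x <= 1) /\
  (forall a, 0 < a <= 1 -> nonempty (acut u a) /\ closed d (acut u a)) /\
  nonempty (cut0 d u) /\ closed d (cut0 d u).

Definition Kliminf {T : Type} (d : T -> T -> R) (C : nat -> T -> Prop) : T -> Prop :=
  fun x => exists s : nat -> T, (forall n, C n (s n)) /\ seq_lim d s x.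

Definition Klimsup {T : Type} (d : T -> T -> R) (C : nat -> T -> Prop) : T -> Prop :=
  fun x => exists (phi : nat -> nat) (s : nat -> T),
    (forall j, (phi j < phi (S j))%nat) /\ (forall j, C (phi j) (s j)) /\ seq_lim d s x.

Definition Kconv {T : Type} (d : T -> T -> R) (C : nat -> T -> Prop) (D : T -> Prop) : Prop :=
  set_eq D (Kliminf d C) /\ set_eq D (Klimsup d C).

Definition I01 : Type := { t : R | 0 <= t <= 1 }.

Definition dbar {X : Type} (d : X -> X -> R) (p q : X * I01) : R :=
  d (fst p) (fst q) + Rabs (proj1_sig (snd p) - proj1_sig (snd q)).

Definition endo {X : Type} (u : X -> R) : X * I01 -> Prop :=
  fun p => proj1_sig (snd p) <= u (fst p).

Definition Gamma_conv {X : Type} (d : X -> X -> R) (us : nat -> X -> R) (u : X -> R) : Prop :=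
  Kconv (dbar d) (fun n => endo (us n)) (endo u).

(* Main.v *)
Require Import Defs.
From Stdlib Require Import Reals.
From Stdlib Require Import Lra Lia Classical IndefiniteDescription.
Open Scope R_scope.

Definition Pset {T : Type} (dT : T -> T -> R) (C : nat -> T -> Prop) (x : T) : Prop :=
  forall eps, 0 < eps -> exists N : nat, forall n, (N <= n)%nat ->
    exists y, C n y /\ dT y x < eps.

Lemma inv_S_le (k m : nat) : (k <= m)%nat -> / INR (S m) <= / INR (S k).
Proof.
  intro H. apply Rinv_le_contravar.
  - apply lt_0_INR; lia.
  - apply le_INR; lia.
Qed.

Lemma choose_n {T : Type} (dT : T -> T -> R) (C : nat -> T -> Prop) (x : T) (n : nat) :
  (exists y, C n y) -> forall m, exists y, C n y /\ forall k, (k <= m)%nat ->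
    (exists z, C n z /\ dT z x < / INR (S k)) -> dT y x < / INR (S k).
Proof.
  intros [y0 Hy0] m. induction m as [|m IH].
  - destruct (classic (exists z, C n z /\ dT z x < / INR 1)) as [[z [Hz1 Hz2]]|Hn].
    + exists z; split; auto. intros k Hk _. replace k with 0%nat by lia. exact Hz2.
    + exists y0; split; auto. intros k Hk Hex. replace k with 0%nat in Hex by lia.
      exfalso; apply Hn; exact Hex.
  - destruct (classic (exists z, C n z /\ dT z x < / INR (S (S m)))) as [[z [Hz1 Hz2]]|Hn].
    + exists z; split; auto. intros k Hk _.
      pose proof (inv_S_le k (S m) Hk). lra.
    + destruct IH as [y [Hy1 Hy2]]. exists y; split; auto.
      intros k Hk Hex. destruct (Nat.eq_dec k (S m)) as [->|Hne].
      * exfalso; apply Hn; exact Hex.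
      * apply Hy2; auto; lia.
Qed.

Lemma P_liminf {T : Type} (dT : T -> T -> R) (C : nat -> T -> Prop) (x : T) :
  (forall n, exists y, C n y) -> Pset dT C x -> Kliminf dT C x.
Proof.
  intros Hne HP.
  assert (Hf : forall n, { y | C n y /\ forall k, (k <= n)%nat ->
    (exists z, C n z /\ dT z x < / INR (S k)) -> dT y x < / INR (S k) }).
  { intro n. apply constructive_indefinite_description. apply choose_n; auto. }
  exists (fun n => proj1_sig (Hf n)). split.
  - intro n. exact (proj1 (proj2_sig (Hf n))).
  - intros eps Heps. destruct (archimed_cor1 eps Heps) as [K [HK HK0]].
    destruct K as [|k]; [lia|].
    assert (Hk : 0 < / INR (S k)) by (apply Rinv_0_lt_compat, lt_0_INR; lia).
    destruct (HP _ Hk) as [N HN].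
    exists (Nat.max N k). intros n Hn.
    assert (dT (proj1_sig (Hf n)) x < / INR (S k)).
    { apply (proj2 (proj2_sig (Hf n))); [lia|]. apply HN; lia. }
    lra.
Qed.

Lemma P_closure {X : Type} (d : X -> X -> R) (Hd : is_metric d) (S : X -> Prop)
  (C : nat -> X -> Prop) (x : X) :
  (forall y, S y -> Pset d C y) -> closure d S x -> Pset d C x.
Proof.
  destruct Hd as [H0 [H1 [Hsym Htri]]].
  intros HS Hcl eps Heps.
  destruct (Hcl (eps/2)) as [y [Sy Hxy]]; [lra|].
  destruct (HS y Sy (eps/2)) as [N HN]; [lra|].
  exists N. intros n Hn. destruct (HN n Hn) as [z [Cz Hzy]].
  exists z. split; auto. pose proof (Htri z y x). rewrite (Hsym y x) in H. lra.
Qed.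

Lemma liminf_limsup {T : Type} (dT : T -> T -> R) (C : nat -> T -> Prop) (x : T) :
  Kliminf dT C x -> Klimsup dT C x.
Proof.
  intros [s [Hs Hl]]. exists (fun j => j), s. split; [intro j; lia|]. split; auto.
Qed.

Theorem theorem3p4 (X : Type) (d : X -> X -> R) (Hd : is_metric d)
  (u : X -> R) (us : nat -> X -> R)
  (Hu : FUSC d u) (Hus : forall n, FUSC d (us n)) :
  Gamma_conv d us u <->
  (forall a, 0 < a <= 1 ->
     subset (closure d (fun x => a < u x)) (Kliminf d (fun n => acut (us n) a)) /\
     subset (Kliminf d (fun n => acut (us n) a)) (Klimsup d (fun n => acut (us n) a)) /\
     subset (Klimsup d (fun n => acut (us n) a)) (acut u a)).
Proof.
  pose proof Hd as [Hd0 [Hd1 [Hsym Htri]]].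
  assert (Hdxx : forall x, d x x = 0) by (intro x; apply Hd1; reflexivity).
  destruct Hu as [Hu01 _].
  split.
  - intros [Hli Hls] a Ha. split; [|split].
    + intros x Hx. apply P_liminf.
      { intro n. destruct (Hus n) as [_ [Hc _]]. destruct (Hc a Ha) as [[y Hy] _]. exists y; exact Hy. }
      apply (P_closure d Hd (fun x => a < u x)); auto.
      intros y Hy eps Heps.
      assert (Hend : endo u (y, exist _ (u y) (Hu01 y))) by (unfold endo; simpl; lra).
      destruct (proj1 (Hli _) Hend) as [s [Hs Hl]].
      destruct (Hl (Rmin eps (u y - a))) as [N HN].
      { apply Rmin_pos; lra. }
      exists N. intros n Hn. pose proof (HN n Hn) as Hdn.
      pose proof (Rmin_l eps (u y - a)). pose proof (Rmin_r eps (u y - a)).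
      specialize (Hs n). destruct (s n) as [z [t Ht]]. unfold endo, dbar in *; simpl in *.
      exists z. pose proof (Rabs_pos (t - u y)).
      split.
      * unfold acut. pose proof (Rle_abs (u y - t)) as Hab. rewrite Rabs_minus_sym in Hab.
        pose proof (Hd0 z y). lra.
      * lra.
    + intros x. apply liminf_limsup.
    + intros x [phi [s [Hphi [Hs Hl]]]].
      assert (Ha' : 0 <= a <= 1) by lra.
      assert (Hk : Klimsup (dbar d) (fun n => endo (us n)) (x, exist _ a Ha')).
      { exists phi, (fun j => (s j, exist _ a Ha')). split; auto. split.
        - intro j. unfold endo; simpl. apply Hs.
        - intros eps Heps. destruct (Hl eps Heps) as [N HN]. exists N. intros n Hn.
          unfold dbar; simpl. replace (a - a) with 0 by ring. rewrite Rabs_R0.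
          specialize (HN n Hn). lra. }
      apply (proj2 (Hls _)) in Hk. unfold endo in Hk; simpl in Hk. exact Hk.
  - intros H.
    assert (L2 : forall p, Klimsup (dbar d) (fun n => endo (us n)) p -> endo u p).
    { intros [x [t Ht]] [phi [s [Hphi [Hs Hl]]]]. unfold endo; simpl.
      destruct (Rle_or_lt t 0) as [Ht0|Ht0].
      { pose proof (Hu01 x). lra. }
      destruct (Rle_or_lt t (u x)) as [|Hlt]; auto. exfalso.
      pose proof (Hu01 x).
      set (b := (u x + t) / 2).
      assert (Hb : 0 < b <= 1) by (unfold b; lra).
      destruct (H b Hb) as [_ [_ H3]].
      destruct (Hl (t - b)) as [K HK]; [unfold b; lra|].
      assert (Hx : Klimsup d (fun n => acut (us n) b) x).
      { exists (fun j => phi (j + K)%nat), (fun j => fst (s (j + K)%nat)). split; [|split].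
        - intro j. replace (S j + K)%nat with (S (j + K)) by lia. apply Hphi.
        - intro j. specialize (Hs (j + K)%nat). specialize (HK (j + K)%nat ltac:(lia)).
          destruct (s (j+K)%nat) as [z [tz Htz]]. unfold endo, dbar, acut in *; simpl in *.
          pose proof (Hd0 z x). pose proof (Rle_abs (t - tz)) as Hab. rewrite Rabs_minus_sym in Hab.
          lra.
        - intros eps Heps. destruct (Hl eps Heps) as [N HN]. exists N. intros n Hn.
          specialize (HN (n + K)%nat ltac:(lia)).
          destruct (s (n+K)%nat) as [z [tz Htz]]. unfold dbar in *; simpl in *.
          pose proof (Rabs_pos (tz - t)). lra. }
      apply H3 in Hx. unfold acut in Hx. unfold b in Hx. lra. }
    assert (L1 : forall p, endo u p -> Kliminf (dbar d) (fun n => endo (us n)) p).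
    { intros [x [t Ht]] Hp. unfold endo in Hp; simpl in Hp.
      assert (H00 : 0 <= 0 <= 1) by lra.
      apply P_liminf.
      { intro n. exists (x, exist _ 0 H00). unfold endo; simpl.
        destruct (Hus n) as [Hn _]. apply Hn. }
      intros eps Heps.
      destruct (Rle_or_lt t 0) as [Ht0|Ht0].
      - exists 0%nat. intros n _. exists (x, exist _ 0 H00). split.
        + unfold endo; simpl. destruct (Hus n) as [Hn _]. apply Hn.
        + unfold dbar; simpl. rewrite Hdxx. replace (0 - t) with 0 by lra.
          rewrite Rabs_R0. lra.
      - pose proof (Rmin_l eps t). pose proof (Rmin_r eps t).
        pose proof (Rmin_pos eps t Heps Ht0).
        set (b := t - Rmin eps t / 2).
        assert (Hb : 0 < b <= 1) by (unfold b; lra).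
        assert (Hb' : 0 <= b <= 1) by lra.
        destruct (H b Hb) as [Hc1 _].
        assert (Hcl : closure d (fun y => b < u y) x).
        { intros e He. exists x. rewrite Hdxx. split; [unfold b; lra | lra]. }
        destruct (Hc1 x Hcl) as [s [Hs Hl]].
        destruct (Hl (eps - (t - b))) as [N HN]; [unfold b; lra|].
        exists N. intros n Hn. exists (s n, exist _ b Hb'). split.
        + unfold endo; simpl. apply Hs.
        + unfold dbar; simpl. specialize (HN n Hn).
          rewrite Rabs_left; [lra | unfold b; lra]. }
    split; intro p.
    + split; [apply L1 | intro Hq; apply L2, liminf_limsup, Hq].
    + split; [intro Hq; apply liminf_limsup, L1, Hq | apply L2].
Qed.
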